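(* Let $X$ be a feasible solution of the General-Cost Convex Program and let $\alpha_i$ be the first arrival times produced by Continuous-Time Poisson Rounding from $X$. For any $\tau\ge 0$, $$\mathbf{E}\Big[\sum_{i:\,\alpha_i<\tau}c_i\Big]\le\tau.$$
   Context: Boxes $[n]$ with costs $c_i>0$. Write $x_+=\max\{x,0\}$. A feasible solution of the General-Cost Convex Program is a family of non-decreasing functions $X_i:[0,\infty)\to[0,1]$, $i\in[n]$, with $\sum_{i\in[n]}\big(X_i(t)-X_i((t-c_i)_+)\big)\le 1$ for all $t\ge 0$. Continuous-Time Poisson Rounding: let $\bar x_i(t)=\frac1t\int_0^t\big(X_i(t')-X_i((t'-c_i)_+)\big)\,dt'$. Independently for each box $i$, arrivals of box $i$ form a non-homogeneous Poisson process in time $\tau\ge 0$ with rate $\frac1{c_i}\bar x_i(\tau/2)$; $\alpha_i$ is the first arrival time of box $i$ ($\infty$ if none). *)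

(* Defs.v *)
From HB Require Import structures.
From mathcomp Require Import all_boot all_order all_algebra.
From mathcomp Require Import all_classical all_reals all_analysis.
From mathcomp Require Import measurable_realfun.
Set Implicit Arguments. Unset Strict Implicit. Unset Printing Implicit Defensive.
Import Order.TTheory GRing.Theory Num.Theory.
Import numFieldNormedType.Exports.
Local Open Scope classical_set_scope.
Local Open Scope ring_scope.

Section GCCP.
Variables (R : realType) (n : nat) (c : 'I_n -> R) (X : 'I_n -> R -> R).

Definition posp (x : R) : R := Num.max x 0.

(* feasibility for the General-Cost Convex Program; the functions X_i are
   defined on all of R but only their values on [0, oo) matter. *)
Definition GCCP_feasible : Prop :=
  (forall i s t, 0 <= s -> s <= t -> X i s <= X i t) /\
  (forall i t, 0 <= t -> 0 <= X i t <= 1) /\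
  (forall t, 0 <= t -> \sum_(i < n) (X i t - X i (posp (t - c i))) <= 1).

(* xbar_i(t) = (1/t) int_0^t (X_i(t') - X_i((t'-c_i)_+)) dt'
   (Lebesgue integral; at t = 0 the value is 0 since 0^-1 = 0 in MathComp,
   which is irrelevant: a single point is Lebesgue-null). *)
Definition xbar (i : 'I_n) (t : R) : R :=
  t^-1 * \int[@lebesgue_measure R]_(t' in `[0, t]) (X i t' - X i (posp (t' - c i))).

Definition poisson_rate (i : 'I_n) (tau : R) : R := (c i)^-1 * xbar i (tau / 2).

Definition cum_intensity (i : 'I_n) (t : R) : R :=
  \int[@lebesgue_measure R]_(s in `[0, t]) poisson_rate i s.

End GCCP.

(* alpha is the first arrival time of a (non-homogeneous) Poisson process with
   cumulative intensity Lam: P(no arrival in [0,t]) = P(alpha > t) = exp(-Lam t). *)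
Definition first_arrival_law d (T : measurableType d) (R : realType)
  (P : probability T R) (alpha : T -> \bar R) (Lam : R -> R) : Prop :=
  measurable_fun (setT : set T) (alpha : T -> \bar R) /\
  forall t : R, 0 <= t -> P [set w | (t%:E < alpha w)%E] = (expR (- Lam t))%:E.

Definition mutually_independent d (T : measurableType d) (R : realType)
  (P : probability T R) (n : nat) (alpha : 'I_n -> T -> \bar R) : Prop :=
  forall (J : {set 'I_n}) (B : 'I_n -> set (\bar R)),
    (forall j, measurable (B j)) ->
    P (\bigcap_(j in [set j | j \in J]) (alpha j @^-1` B j)) =
    (\prod_(j in J) P (alpha j @^-1` B j))%E.

(* Main.v *)
Require Import Defs.
From HB Require Import structures.
From mathcomp Require Import all_boot all_order all_algebra.
From mathcomp Require Import all_classical all_reals all_analysis.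
From mathcomp Require Import measurable_realfun.
From mathcomp Require Import lra.
Import Order.TTheory GRing.Theory Num.Theory.
Import numFieldNormedType.Exports.
Local Open Scope classical_set_scope.
Local Open Scope ring_scope.

Section S.
Variable R : realType.
Notation mu := (@lebesgue_measure R).
Lemma mu_cc (t : R) : 0 <= t -> mu `[0, t] = t%:E.
Proof.
move=> t0; rewrite lebesgue_measure_itv /=.
rewrite lte_fin; case: ltP => [_|]; first by rewrite sube0.
by move=> t0'; have -> : t = 0 by lra.
Qed.

Lemma int01 (f : R -> R) (t : R) : 0 <= t -> measurable_fun `[0, t] f ->
  (forall x, 0 <= x <= t -> 0 <= f x <= 1) ->
  (0 <= \int[mu]_(x in `[0%R, t]) (f x)%:E <= t%:E)%E.
Proof.
move=> t0 mf f01; apply/andP; split.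
  apply: integral_ge0 => x; rewrite /= in_itv /= => /f01 /andP[+ _].
  by rewrite lee_fin.
apply: (@le_trans _ _ (\int[mu]_(x in `[0%R, t]) (cst 1%E x))%E).
  apply: ge0_le_integral => //.
  all: try (by move=> x; rewrite /= in_itv /= => /f01 /andP[+ _]; rewrite lee_fin).
  all: try (by move=> x; rewrite /= in_itv /= => /f01 /andP[_]; rewrite lee_fin).
  all: try exact/measurable_EFinP.
  all: try exact: measurable_cst.
by rewrite integral_cst //= mu_cc // mul1e.
Qed.

Lemma Rint01 (f : R -> R) (t : R) : 0 <= t -> measurable_fun `[0, t] f ->
  (forall x, 0 <= x <= t -> 0 <= f x <= 1) ->
  (\int[mu]_(x in `[0, t]) f x)%:E = (\int[mu]_(x in `[0%R, t]) (f x)%:E)%E.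
Proof.
move=> t0 mf f01; have /andP[a b] := @int01 f t t0 mf f01.
rewrite /Rintegral fineK // ge0_fin_numE //; exact: le_lt_trans b (ltry _).
Qed.
End S.

Section Det.
Variables (R : realType) (n : nat) (c : 'I_n -> R) (X : 'I_n -> R -> R).
Hypothesis c0 : forall i, 0 < c i.
Hypothesis feas : GCCP_feasible c X.
Notation mu := (@lebesgue_measure R).

Lemma posp_ge0 (t : R) : 0 <= posp t.
Proof. by rewrite /posp le_max lexx orbT. Qed.

Lemma posp_id (t : R) : 0 <= t -> posp t = t.
Proof. by move=> t0; rewrite /posp max_l. Qed.

Lemma posp_nd (s t : R) : s <= t -> posp s <= posp t.
Proof. move=> st; rewrite /posp le_max !ge_max; case: (leP 0 s) => s0; lra. Qed.

Definition g i (t : R) := X i (posp t).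
Definition h i (t : R) := g i t - g i (t - c i).

Lemma g_nd i : nondecreasing_fun (g i).
Proof. move=> s t st; case: feas => [mon _]; apply: mon; [exact: posp_ge0|exact: posp_nd]. Qed.

Lemma g01 i t : 0 <= g i t <= 1.
Proof. by case: feas => [_ [b _]]; apply: b; exact: posp_ge0. Qed.

Lemma h_ge0 i t : 0 <= h i t.
Proof. rewrite /h subr_ge0; apply: g_nd; have := c0 i; lra. Qed.

Lemma h_le1 i t : h i t <= 1.
Proof. rewrite /h; have := g01 i t; have := g01 i (t - c i); lra. Qed.

Lemma h_mes i : measurable_fun setT (h i).
Proof.
apply: measurable_funB; first exact: nondecreasing_measurable (g_nd i).
apply: nondecreasing_measurable => // s t st; apply: g_nd; lra.
Qed.

Lemma hE i t : 0 <= t -> X i t - X i (posp (t - c i)) = h i t.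
Proof.
move=> t0; rewrite /h /g [posp t]posp_id //.
Qed.

Lemma sum_h_le1 t : 0 <= t -> \sum_(i < n) h i t <= 1.
Proof.
move=> t0; case: feas => [_ [_ s]]; rewrite -(eq_bigr _ (fun i _ => @hE i t t0)).
exact: s.
Qed.


Definition F i (t : R) := \int[mu]_(x in `[0, t]) (X i x - X i (posp (x - c i))).

Lemma F_h i (t : R) : F i t = \int[mu]_(x in `[0, t]) h i x.
Proof.
apply: eq_Rintegral => x; rewrite inE /= in_itv /= => /andP[x0 _]; exact: hE.
Qed.

Lemma h_mes' i (D : set R) : measurable_fun D (h i).
Proof. exact: measurable_funS (h_mes i). Qed.

Lemma h01 i x : 0 <= h i x <= 1.
Proof. by rewrite h_ge0 h_le1. Qed.

Lemma F_E i (t : R) : 0 <= t ->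
  (F i t)%:E = (\int[mu]_(x in `[0%R, t]) (h i x)%:E)%E.
Proof. by move=> t0; rewrite F_h; apply: Rint01 => // *; [exact: h_mes'|exact: h01]. Qed.

Lemma F01 i (t : R) : 0 <= t -> 0 <= F i t <= t.
Proof.
move=> t0; rewrite -!lee_fin F_E //; apply: int01 => // *; [exact: h_mes'|exact: h01].
Qed.

Lemma F_neg i (t : R) : t < 0 -> F i t = 0.
Proof.
move=> t0; rewrite /F set_itv_ge ?Rintegral_set0 //.
by rewrite bnd_simp -ltNge.
Qed.

Lemma F_nd i : nondecreasing_fun (F i).
Proof.
move=> s t st; have [s0|s0] := ltP s 0.
  rewrite F_neg //; have [t0|t0] := ltP t 0; first by rewrite F_neg.
  by have /andP[] := @F01 i t t0.
rewrite -lee_fin !F_E //; last by lra.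
apply: ge0_subset_integral => //.
- by apply/measurable_EFinP; exact: h_mes'.
- by move=> x _; rewrite lee_fin h_ge0.
- by move=> x /=; rewrite !in_itv /= => /andP[-> xs] /=; lra.
Qed.

Lemma sumF (t : R) : 0 <= t -> \sum_(i < n) F i t <= t.
Proof.
move=> t0; rewrite -lee_fin -sumEFin.
rewrite (eq_bigr _ (fun i _ => @F_E i t t0)) -ge0_integral_sum //; last 2 first.
- by move=> i; by apply/measurable_EFinP; exact: h_mes'.
- by move=> i x _; rewrite lee_fin h_ge0.
under eq_integral do rewrite sumEFin.
have := @int01 R (fun x => \sum_(i < n) h i x) t t0.
case/(_ _ _)/andP => //.
- exact: measurable_sum (fun i => h_mes' i _).
- move=> x /andP[x0 _]; rewrite sum_h_le1 // andbT; apply: sumr_ge0 => i _; exact: h_ge0.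
Qed.

Lemma xbar_F i t : xbar c X i t = t^-1 * F i t.
Proof. by []. Qed.

Lemma xbar01 i (t : R) : 0 <= t -> 0 <= xbar c X i t <= 1.
Proof.
move=> t0; rewrite xbar_F; have /andP[a b] := @F01 i t t0.
have [->|tn0] := eqVneq t 0; first by rewrite invr0 mul0r lexx ler01.
have tp : 0 < t by rewrite lt_neqAle eq_sym tn0.
rewrite mulr_ge0 ?invr_ge0 //= mulrC ler_pdivrMr // mul1r //.
Qed.

Lemma sum_xbar (t : R) : 0 <= t -> \sum_(i < n) xbar c X i t <= 1.
Proof.
move=> t0; under eq_bigr do rewrite xbar_F; rewrite -mulr_sumr.
have [->|tn0] := eqVneq t 0; first by rewrite invr0 mul0r ler01.
have tp : 0 < t by rewrite lt_neqAle eq_sym tn0.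
by rewrite mulrC ler_pdivrMr // mul1r sumF.
Qed.

End Det.

Section Meas.
Variables (R : realType) (n : nat) (c : 'I_n -> R) (X : 'I_n -> R -> R).
Hypothesis c0 : forall i, 0 < c i.
Hypothesis feas : GCCP_feasible c X.
Notation mu := (@lebesgue_measure R).

Lemma inv_mes (tau : R) : measurable_fun `]0, tau] (@GRing.inv R).
Proof.
have H : measurable_fun (`]0, +oo[ : set R) (@GRing.inv R).
  apply: open_continuous_measurable_fun; first exact: rray_open.
  move=> x; rewrite inE /= in_itv /= andbT => x0.
  by apply: inv_continuous; rewrite gt_eqF.
apply: measurable_funS H => //.
by move=> x /=; rewrite !in_itv /= => /andP[-> _].
Qed.

Lemma u_mes i (tau : R) : measurable_fun `[0, tau] (fun s => xbar c X i (s / 2)).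
Proof.
apply/measurable_fun_itv_obnd_cbndP.
rewrite (_ : (fun s => _) = (fun s => (s^-1 * 2) * @F R n c X i (s / 2))); last first.
  apply: boolp.funext => s; rewrite (@xbar_F R n c X).
by rewrite invf_div [2 / s]mulrC.
have := (@measurable_funM _ R R `]0, tau] (fun s => s^-1 * 2) (fun s => @F R n c X i (s / 2))).
apply.
  have := (@measurable_funM _ R R `]0, tau] (fun s => s^-1) (fun _ => 2)).
  apply; first exact: inv_mes.
  exact: measurable_cst.
apply: nondecreasing_measurable => // s t st; apply: (@F_nd R n c X c0 feas); lra.
Qed.

End Meas.

Section Main.
Variables (R : realType) (n : nat) (c : 'I_n -> R) (X : 'I_n -> R -> R).
Hypothesis c0 : forall i, 0 < c i.
Hypothesis feas : GCCP_feasible c X.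
Notation mu := (@lebesgue_measure R).

Definition J i (tau : R) := (\int[mu]_(s in `[0%R, tau]) (xbar c X i (s / 2))%:E)%E.

Lemma u01 i (tau s : R) : 0 <= s <= tau -> 0 <= xbar c X i (s / 2) <= 1.
Proof. move=> /andP[s0 _]; apply: (@xbar01 R n c X c0 feas); lra. Qed.

Lemma J01 i (tau : R) : 0 <= tau -> (0 <= J i tau <= tau%:E)%E.
Proof.
move=> t0; apply: int01 => //; first exact: (@u_mes R n c X c0 feas).
exact: u01.
Qed.

Lemma Lam_E i (tau : R) : 0 <= tau -> (c i * cum_intensity c X i tau)%:E = J i tau.
Proof.
move=> t0; have /andP[a b] := @J01 i tau t0.
have Jf : J i tau \is a fin_num by rewrite ge0_fin_numE //; exact: le_lt_trans b (ltry _).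
rewrite /cum_intensity /poisson_rate /Rintegral.
under eq_integral do rewrite EFinM.
rewrite ge0_integralZl_EFin //; last 3 first.
- by move=> x; rewrite /= in_itv /= => xin; have /andP[+ _] := @u01 i tau x xin; rewrite lee_fin.
- by apply/measurable_EFinP; exact: (@u_mes R n c X c0 feas).
- by rewrite invr_ge0 ltW.
rewrite -/(J i tau) fineM // mulrA divff ?gt_eqF // mul1r fineK //.
Qed.

Lemma sumJ (tau : R) : 0 <= tau -> (\sum_(i < n) J i tau <= tau%:E)%E.
Proof.
move=> t0; rewrite /J -ge0_integral_sum //; last 2 first.
- by move=> i; apply/measurable_EFinP; exact: (@u_mes R n c X c0 feas).
- by move=> i x; rewrite /= in_itv /= => xin; have /andP[+ _] := @u01 i tau x xin; rewrite lee_fin.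
under eq_integral do rewrite sumEFin.
have := @int01 R (fun s => \sum_(i < n) xbar c X i (s / 2)) tau t0.
case/(_ _ _)/andP => //.
- exact: measurable_sum (fun i => @u_mes R n c X c0 feas i _).
- move=> x /andP[x0 _]; rewrite (@sum_xbar R n c X c0 feas) ?andbT; last lra.
  apply: sumr_ge0 => i _; have H : 0 <= x <= x by rewrite x0 lexx.
  by have /andP[] := @u01 i x x H.
Qed.

End Main.

Theorem lemma4p3 (R : realType) (n : nat) (c : 'I_n -> R) (X : 'I_n -> R -> R)
  (d : measure_display) (T : measurableType d) (P : probability T R)
  (alpha : 'I_n -> T -> \bar R) :
  (forall i, 0 < c i) ->
  GCCP_feasible c X ->
  mutually_independent P alpha ->
  (forall i, first_arrival_law P (alpha i) (cum_intensity c X i)) ->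
  forall tau : R, 0 <= tau ->
  (\int[P]_w (\sum_(i < n | (alpha i w < tau%:E)%E) c i)%:E <= tau%:E)%E.
Proof.
move=> c0 feas _ law tau t0.
pose A i := [set w | (alpha i w < tau%:E)%E].
have mA i : measurable (A i).
  have [ma _] := law i.
  by rewrite -[A i]setTI; apply: measurable_lte => //; exact: measurable_cst.
have mB i : measurable [set w | (tau%:E < alpha i w)%E].
  have [ma _] := law i.
  by rewrite -[X in measurable X]setTI; apply: measurable_lte => //; exact: measurable_cst.
have -> : (fun w => (\sum_(i < n | (alpha i w < tau%:E)%E) c i)%:E) =
    (fun w => \sum_(i < n) (c i * \1_(A i) w)%:E)%E.
  apply: boolp.funext => w; rewrite sumEFin big_mkcond /=; congr (_%:E).
  apply: eq_bigr => i _; rewrite indicE /A.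
  case: ifP => h; first by rewrite mem_set // mulr1.
  by rewrite memNset ?mulr0 //= h.
rewrite ge0_integral_sum //; last 2 first.
- move=> i; apply/measurable_EFinP.
  have := @measurable_funM _ T R setT (fun _ => c i) (\1_(A i)); apply.
    exact: measurable_cst.
  exact: measurable_indic.
- by move=> i w _; rewrite lee_fin mulr_ge0 // ltW.
apply: le_trans (@sumJ R n c X c0 feas tau t0).
apply: lee_sum => i _.
under eq_integral do rewrite EFinM.
rewrite ge0_integralZl_EFin //; last 2 first.
- by apply/measurable_EFinP; exact: measurable_indic.
- exact: ltW.
rewrite integral_indic // setIT -(@Lam_E R n c X c0 feas i tau t0) EFinM.
apply: lee_pmul => //; first by rewrite lee_fin ltW.
have [_ lawi] := law i.
apply: (@le_trans _ _ (P (~` [set w | (tau%:E < alpha i w)%E]))).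
  apply: le_measure; rewrite ?inE //; first exact: measurableC.
  by move=> w /= aw bw; move: (lt_trans aw bw); rewrite ltxx.
rewrite probability_setC // lawi // -EFinB lee_fin.
have := expR_ge1Dx (- cum_intensity c X i tau); lra.
Qed.
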